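(* Let $G$ be a finite simple undirected graph, $r<s$ positive integers, and run set-k on $(G,r,s)$. For every positive integer $k$ for which the transition time $t_k$ is defined, every $k$-$(r,s)$-nucleus $\mathcal{S}$ of $G$ satisfies $\mathcal{S}\subseteq\mathcal{S}_{t_k}$.
   Context: A $K_r$ is an $r$-clique of $G$. For a set $\mathcal{S}$ of $K_s$s: $K_r(\mathcal{S})$ is the set of $K_r$s contained in some member of $\mathcal{S}$; the $\mathcal{S}$-degree of $R\in K_r(\mathcal{S})$ is the number of $S\in\mathcal{S}$ containing $R$; $R,R'$ are $\mathcal{S}$-connected if there is a sequence $R=R_1,\dots,R_m=R'$ in $K_r(\mathcal{S})$ with each $R_i\cup R_{i+1}$ contained in some $S\in\mathcal{S}$. A $k$-$(r,s)$-nucleus is a set $\mathcal{S}$ of $K_s$s, maximal under inclusion among those such that every $R\in K_r(\mathcal{S})$ has $\mathcal{S}$-degree $\ge k$ and any two members of $K_r(\mathcal{S})$ are $\mathcal{S}$-connected. Procedure set-k$(G,r,s)$: enumerate all $K_r$s and $K_s$s; initialize $\delta(R)$ to the number of $K_s$s containing $R$; all $K_r$s unprocessed. Repeat until all processed: pick an unprocessed $K_r$ $R$ with minimum current $\delta(R)$ (ties arbitrary); set $\kappa(R)=\delta(R)$; for each $K_s$ $S\ni R$ such that no $K_r\subset S$ is processed, and for each $K_r$ $R'\subset S$, $R'\neq R$, with $\delta(R')>\delta(R)$, decrease $\delta(R')$ by 1; mark $R$ processed. $R_i$ is the $i$-th processed $K_r$; ''time $t$'' is the beginning of the iteration processing $R_t$.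 The transition time $t_k$ is the unique index with $\kappa(R_{t_k})=k$ and ($t_k=1$ or $\kappa(R_{t_k-1})<k$). $\mathcal{S}_t$ is the set of $K_s$s all of whose $K_r$s are unprocessed at time $t$. *)

(* Defs.v *)
From mathcomp Require Import all_boot.
Set Implicit Arguments. Unset Strict Implicit. Unset Printing Implicit Defensive.

(* A finite simple undirected graph: vertex type T : finType, edge relation
   e : rel T, assumed symmetric and irreflexive in the theorem. *)

Section Cliques.
Variables (T : finType) (e : rel T).

Definition is_clique (A : {set T}) : bool :=
  [forall x in A, forall y in A, (x != y) ==> e x y].

Definition Kn (n : nat) : {set {set T}} :=
  [set A : {set T} | is_clique A && (#|A| == n)].

Definition KrOf (r : nat) (SS : {set {set T}}) : {set {set T}} :=
  [set R in Kn r | [exists S in SS, R \subset S]].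

Definition sdeg (SS : {set {set T}}) (R : {set T}) : nat :=
  #|[set S in SS | R \subset S]|.

Definition sadj (r : nat) (SS : {set {set T}}) : rel {set T} :=
  fun R R' => [&& R \in KrOf r SS, R' \in KrOf r SS &
                  [exists S in SS, (R :|: R') \subset S]].

Definition sconnected (r : nat) (SS : {set {set T}}) (R R' : {set T}) : bool :=
  connect (sadj r SS) R R'.

Definition nucleus_prop (k r s : nat) (SS : {set {set T}}) : Prop :=
  [/\ SS \subset Kn s,
      (forall R, R \in KrOf r SS -> k <= sdeg SS R) &
      (forall R R', R \in KrOf r SS -> R' \in KrOf r SS -> sconnected r SS R R')].

Definition is_nucleus (k r s : nat) (SS : {set {set T}}) : Prop :=
  nucleus_prop k r s SS /\
  (forall SS', nucleus_prop k r s SS' -> SS \subset SS' -> SS' = SS).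

Definition delta0 (s : nat) (R : {set T}) : nat :=
  #|[set S in Kn s | R \subset S]|.

Definition dec_count (r s : nat) (P : {set {set T}}) (R R' : {set T}) : nat :=
  #|[set S in Kn s | [&& R \subset S, R' \subset S &
        [forall Q in Kn r, (Q \subset S) ==> (Q \notin P)]]]|.

(* Update of delta when processing R (P = already processed K_r's, not
   containing R).  Each such S decreases delta(R') by one as long as the
   current delta(R') exceeds delta(R); the net effect is the closed form below. *)
Definition step (r s : nat) (P : {set {set T}}) (d : {set T} -> nat)
    (R : {set T}) : {set T} -> nat :=
  fun R' => if (R' \in Kn r) && (R' != R) && (d R < d R')
            then maxn (d R) (d R' - dec_count r s P R R')
            else d R'.

Definition state_after (r s : nat) (pre : seq {set T})
    : {set {set T}} * ({set T} -> nat) :=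
  foldl (fun pd R => (R |: pd.1, step r s pd.1 pd.2 R)) (set0, delta0 s) pre.

(* With processing order rs (R_{t+1} = nth set0 rs t, times 0-indexed):
   delta at time t (beginning of the iteration processing nth rs t) *)
Definition delta_at (r s : nat) (rs : seq {set T}) (t : nat) : {set T} -> nat :=
  (state_after r s (take t rs)).2.

Definition processed_at (r s : nat) (rs : seq {set T}) (t : nat) : {set {set T}} :=
  (state_after r s (take t rs)).1.

(* rs is a valid execution order of set-k: it enumerates every K_r exactly
   once, and at each time the chosen K_r has minimum current delta among the
   unprocessed K_r's (ties arbitrary). *)
Definition valid_run (r s : nat) (rs : seq {set T}) : Prop :=
  uniq rs /\ (forall R, (R \in rs) = (R \in Kn r)) /\
  forall t, t < size rs -> forall R', R' \in Kn r ->
    R' \notin processed_at r s rs t ->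
    delta_at r s rs t (nth set0 rs t) <= delta_at r s rs t R'.

Definition kappa (r s : nat) (rs : seq {set T}) (t : nat) : nat :=
  delta_at r s rs t (nth set0 rs t).

(* t is the transition time t_k (0-indexed) *)
Definition is_transition (r s : nat) (rs : seq {set T}) (k t : nat) : Prop :=
  t < size rs /\ kappa r s rs t = k /\ (t = 0 \/ kappa r s rs t.-1 < k).

Definition S_at (r s : nat) (rs : seq {set T}) (t : nat) : {set {set T}} :=
  [set S in Kn s | [forall Q in Kn r, (Q \subset S) ==> (Q \notin processed_at r s rs t)]].

End Cliques.

(* Main.v *)
Require Import Defs.
From mathcomp Require Import all_boot.
From mathcomp Require Import zify.
Set Implicit Arguments.

Section Aux.
Variables (T : finType) (e : rel T) (r s : nat).

Definition unproc (P : {set {set T}}) (S : {set T}) : bool :=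
  [forall Q in Kn e r, (Q \subset S) ==> (Q \notin P)].

Definition cnt (P : {set {set T}}) (X : {set T}) : nat :=
  #|[set S in Kn e s | (X \subset S) && unproc P S]|.

Lemma state_succ (rs : seq {set T}) t : t < size rs ->
  state_after e r s (take t.+1 rs) =
  (nth set0 rs t |: processed_at e r s rs t,
   step e r s (processed_at e r s rs t) (delta_at e r s rs t) (nth set0 rs t)).
Proof. by move=> ht; rewrite (take_nth set0 ht) /state_after foldl_rcons. Qed.

Lemma state_fst_gen (pre : seq {set T}) P d :
  (foldl (fun pd R => (R |: pd.1, step e r s pd.1 pd.2 R)) (P, d) pre).1
  = P :|: [set x | x \in pre].
Proof.
elim: pre P d => [|x pre IH] P d /=.
  by apply/setP=> y; rewrite in_setU inE in_nil orbF.
rewrite IH; apply/setP=> y; rewrite !in_setU !inE.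
by case: (y == x); case: (y \in P); case: (y \in pre).
Qed.

Lemma processedE rs t : processed_at e r s rs t = [set x | x \in take t rs].
Proof. by rewrite /processed_at /state_after state_fst_gen set0U. Qed.

Lemma cnt_step P d R : R \in Kn e r ->
  (forall X, cnt P X <= d X) -> forall X, cnt (R |: P) X <= step e r s P d R X.
Proof.
move=> HR Hinv X.
set A' := [set S in Kn e s | (X \subset S) && unproc (R |: P) S].
set B := [set S in Kn e s | [&& R \subset S, X \subset S &
        [forall Q in Kn e r, (Q \subset S) ==> (Q \notin P)]]].
set A := [set S in Kn e s | (X \subset S) && unproc P S].
have sA'A : A' \subset A.
  apply/subsetP=> S; rewrite /A' /A !in_set => /andP[H1 /andP[H2 /forall_inP H]].
  rewrite H1 H2 /=.
  apply/forall_inP=> Q HQ; apply/implyP=> HQS.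
  by move: (H Q HQ); rewrite HQS /= in_setU1 negb_or => /andP[].
have key : #|A'| + #|B| <= #|A|.
  have dis : A' :&: B = set0.
    apply/setP=> S; rewrite in_setI in_set0 /A' /B !in_set.
    apply/negbTE; apply/negP=> /andP[/andP[_ /andP[_ /forall_inP H]] /andP[_ /andP[HRS _]]].
    by move: (H R HR); rewrite HRS /= in_setU1 eqxx.
  rewrite -cardsUI dis cards0 addn0; apply: subset_leq_card.
  apply/subsetP=> S; rewrite in_setU => /orP[/(subsetP sA'A)//|].
  by rewrite /B /A !in_set => /andP[H1 /and3P[_ H2 H3]]; rewrite H1 H2.
have hA : cnt P X = #|A| by [].
have hA' : cnt (R |: P) X = #|A'| by [].
have hB : dec_count e r s P R X = #|B| by [].
have := Hinv X; rewrite hA => HdX.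
rewrite hA' /step; case: ifP => _.
  apply: leq_trans (leq_maxr _ _); rewrite hB.
  lia.
by apply: leq_trans HdX; apply: subset_leq_card.
Qed.

End Aux.

Section Main.
Variables (T : finType) (e : rel T) (r s : nat) (rs : seq {set T}).
Hypothesis Hrun : valid_run e r s rs.

Lemma inv_all t : t <= size rs -> forall X,
  cnt e r s (processed_at e r s rs t) X <= delta_at e r s rs t X.
Proof.
case: Hrun => _ [Hmem _].
elim: t => [|t IH] ht X.
  rewrite /processed_at /delta_at take0 /= /cnt /delta0; apply: subset_leq_card.
  by apply/subsetP=> S; rewrite !in_set => /andP[-> /andP[-> _]].
have ht' : t < size rs by [].
rewrite /processed_at /delta_at state_succ //=.
apply: cnt_step; last by move=> Y; apply: IH; apply: ltnW.
by rewrite -Hmem mem_nth.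
Qed.

Lemma kappa_succ t : t.+1 < size rs -> kappa e r s rs t <= kappa e r s rs t.+1.
Proof.
move=> ht.
have ht' : t < size rs by apply: ltn_trans ht.
case: Hrun => Huniq [Hmem Hval].
have Hnext : nth set0 rs t.+1 \in Kn e r by rewrite -Hmem mem_nth.
have Hne : nth set0 rs t.+1 != nth set0 rs t.
  rewrite nth_uniq //; lia.
have Hunp : nth set0 rs t.+1 \notin processed_at e r s rs t.
  rewrite processedE in_set; apply/negP=> /nthP => /(_ set0) [i Hi Heq].
  rewrite size_take ht' in Hi.
  rewrite nth_take // in Heq.
  move/eqP: Heq; rewrite nth_uniq //; last by apply: ltn_trans Hi _.
  by move/eqP=> Ei; move: Hi; rewrite Ei ltnNge leqnSn.
have Hle := Hval t ht' _ Hnext Hunp.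
rewrite /kappa {2}/delta_at state_succ //= /step Hnext Hne /=.
by case: ifP => _ //; apply: leq_maxl.
Qed.

Lemma kappa_mono t1 t2 : t1 <= t2 -> t2 < size rs -> kappa e r s rs t1 <= kappa e r s rs t2.
Proof.
move=> H12; elim: t2 H12 => [|t2 IH]; first by rewrite leqn0 => /eqP ->.
rewrite leq_eqVlt => /orP[/eqP -> //|H] Hs.
apply: (leq_trans _ (kappa_succ t2 Hs)); apply: IH => //; exact: ltn_trans (ltnSn t2) Hs.
Qed.

End Main.

Lemma in_take_nth (T : finType) (rs : seq {set T}) t Q :
  Q \in take t rs -> exists2 i, i < t & (i < size rs) && (nth set0 rs i == Q).
Proof.
move=> /nthP => /(_ set0) [i Hi Heq].
have Hsz := size_take t rs.
have Hit : i < t.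
  move: Hi; rewrite Hsz; case: (ltnP t (size rs)) => H1 H2; lia.
have His : i < size rs.
  move: Hi; rewrite Hsz; case: (ltnP t (size rs)) => H1 H2; lia.
exists i => //; rewrite His /=; rewrite nth_take // in Heq; by rewrite Heq.
Qed.

Unset Implicit Arguments.

Theorem claim3 (T : finType) (e : rel T) (e_sym : symmetric e) (e_irr : irreflexive e)
    (r s : nat) (r_pos : 0 < r) (r_lt_s : r < s)
    (rs : seq {set T}) (Hrun : valid_run e r s rs)
    (k : nat) (k_pos : 0 < k) (tk : nat) (Htk : is_transition e r s rs k tk)
    (SS : {set {set T}}) (Hnuc : is_nucleus e k r s SS) :
  SS \subset S_at e r s rs tk.
Proof.
case: Hnuc => [[HsubK Hdeg _] _].
case: Htk => [Htks [Hk Hprev]].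
apply/subsetP => S HS; rewrite /S_at in_set (subsetP HsubK _ HS) /=.
apply/forall_inP => Q HQ; apply/implyP => HQS; apply/negP => HQP.
have HQK : Q \in KrOf e r SS.
  by rewrite /KrOf in_set HQ /=; apply/existsP; exists S; rewrite HS HQS.
rewrite processedE in_set in HQP.
have [i Hitk /andP[His /eqP Hi]] := @in_take_nth _ _ _ _ HQP.
pose P := fun t => (t < size rs) && (nth set0 rs t \in KrOf e r SS).
have exP : exists t, P t by exists i; rewrite /P His Hi HQK.
case: (ex_minnP exP) => t /andP[Hts HRK] Hmin.
have Htle : t <= i by apply: Hmin; rewrite /P His Hi HQK.
have Httk : t < tk by apply: leq_ltn_trans Htle Hitk.
set R := nth set0 rs t in HRK.
have H1 : k <= sdeg SS R by apply: Hdeg.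
have H2 : sdeg SS R <= cnt e r s (processed_at e r s rs t) R.
  rewrite /sdeg /cnt; apply: subset_leq_card; apply/subsetP => S' ; rewrite in_set => /andP[HS' HRS'].
  rewrite {1}in_set (subsetP HsubK _ HS') HRS' /= /unproc.
  apply/forall_inP => Q' HQ'; apply/implyP => HQS'; apply/negP.
  rewrite processedE in_set => /in_take_nth [j Hjt /andP[Hjs /eqP Hj]].
  have : t <= j.
    apply: Hmin; rewrite /P Hjs Hj /KrOf in_set HQ' /=.
    by apply/existsP; exists S'; rewrite HS' HQS'.
  by rewrite leqNgt Hjt.
have H3 := @inv_all T e r s rs Hrun t (ltnW Hts) R.
have Hprev' : kappa e r s rs tk.-1 < k.
  by case: Hprev => // Z; move: Httk; rewrite Z.
have H4 : kappa e r s rs t <= kappa e r s rs tk.-1.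
  apply: kappa_mono => //; first by rewrite -ltnS (ltn_predK Httk).
  by apply: leq_ltn_trans (leq_pred _) Htks.
have : kappa e r s rs t = delta_at e r s rs t R by [].
lia.
Qed.
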